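(* Let $[\mathbf{T},\mathbf{o}]$ be a unimodular random rooted Family Tree. Then the distribution of $[\mathbf{T},\mathbf{o}]$ is completely determined by the distribution of the descendant tree $[D(\mathbf{o}),\mathbf{o}]$ of its root.
   Context: A Family Tree is a locally finite directed tree in which every vertex has out-degree at most one (the out-neighbour is the parent). $D(\mathbf{o})$ is the subtree of $\mathbf{o}$ and all vertices having a directed path to $\mathbf{o}$, rooted at $\mathbf{o}$. A random rooted network $[\mathbf{G},\mathbf{o}]$ is unimodular if $\mathbb{E}[\sum_{u\in V(\mathbf{G})}h([\mathbf{G},\mathbf{o},u])]=\mathbb{E}[\sum_{u\in V(\mathbf{G})}h([\mathbf{G},u,\mathbf{o}])]$ for every measurable $h\ge0$ on isomorphism classes of doubly rooted networks. *)

(* Defs.v *)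
From HB Require Import structures.
From mathcomp Require Import all_boot all_order all_algebra.
From mathcomp Require Import all_classical all_reals all_analysis.
From mathcomp Require Import measurable_realfun.
Set Implicit Arguments. Unset Strict Implicit. Unset Printing Implicit Defensive.
Import Order.TTheory GRing.Theory Num.Theory.
Local Open Scope classical_set_scope.
Local Open Scope ereal_scope.

(* A (representative of a) rooted network whose underlying graph is a
   directed graph with out-degree <= 1: vertex set [vset] (a set of naturals;
   locally finite connected graphs are countable), parent map [par]
   (the out-neighbour), and root [root]. *)
Record rnet := RNet { vset : set nat; par : nat -> option nat; root : nat }.

Definition adj (G : rnet) (u v : nat) : Prop :=
  vset G u /\ vset G v /\ (par G u = Some v \/ par G v = Some u).

Fixpoint within (G : rnet) (r : nat) (o v : nat) : Prop :=
  match r with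
  | 0 => v = o /\ vset G o
  | r'.+1 => within G r' o v \/ exists w, within G r' o w /\ adj G w v
  end.

Definition ball_iso (G : rnet) (o : nat) (H : rnet) (p : nat) (r : nat)
  (f : nat -> nat) : Prop :=
  exists g : nat -> nat,
    (forall v, within G r o v -> within H r p (f v) /\ g (f v) = v) /\
    (forall w, within H r p w -> within G r o (g w) /\ f (g w) = w) /\
    f o = p /\
    (forall u v, within G r o u -> within G r o v ->
       (par G u = Some v <-> par H (f u) = Some (f v))).

(* generators of the Borel sigma-algebra of the local topology on rooted
   networks: "the r-ball around the root is isomorphic to that of H" *)
Definition rnet_gen : set (set rnet) :=
  [set A | exists (H : rnet) (r : nat),
     A = [set G | exists f, ball_iso G (root G) H (root H) r f]].

Definition rnet_meas : set (set rnet) := <<s rnet_gen>>.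

(* doubly rooted networks [G, o, v] : (G with root o, v) *)
Definition rnet2 := (rnet * nat)%type.

Definition rnet2_gen : set (set rnet2) :=
  [set A | exists (H : rnet) (q r : nat),
     A = [set x | within x.1 r (root x.1) x.2 /\
                  exists f, ball_iso x.1 (root x.1) H (root H) r f /\ f x.2 = q]].

Definition rnet2_meas : set (set rnet2) := <<s rnet2_gen>>.

Definition reroot (G : rnet) (u : nat) : rnet := RNet (vset G) (par G) u.

Definition swap2 (x : rnet2) : rnet2 := (reroot x.1 x.2, root x.1).

Fixpoint anc (G : rnet) (k : nat) (v : nat) : option nat :=
  match k with
  | 0 => Some v
  | k'.+1 => obind (par G) (anc G k' v)
  end.

Definition is_family_tree (G : rnet) : Prop :=
  vset G (root G) /\
  (forall v w, vset G v -> par G v = Some w -> vset G w) /\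
  (forall v k, vset G v -> (0 < k)%N -> anc G k v <> Some v) /\
  (forall v, vset G v -> finite_set [set w | vset G w /\ par G w = Some v]) /\
  (forall v, vset G v -> exists r, within G r (root G) v).

Definition is_desc (G : rnet) (o v : nat) : Prop := exists k, anc G k v = Some o.

Definition desc_tree (G : rnet) : rnet :=
  RNet [set v | vset G v /\ is_desc G (root G) v]
       (fun v => if v == root G then None else par G v) (root G).

Definition unimodular_rft (R : realType) (d : measure_display)
  (Omega : measurableType d) (P : probability Omega R) (X : Omega -> rnet) : Prop :=
  (forall w, is_family_tree (X w)) /\
  (forall A, rnet_meas A -> measurable (X @^-1` A)) /\
  (forall h : rnet2 -> \bar R, (forall x, 0 <= h x) ->
     (forall B : set (\bar R), measurable B -> rnet2_meas (h @^-1` B)) ->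
     \int[P]_w (esum (vset (X w)) (fun u => h (X w, u))) =
     \int[P]_w (esum (vset (X w)) (fun u => h (swap2 (X w, u))))).

(* Main.v *)
From Pilot Require Import Defs.
From HB Require Import structures.
From mathcomp Require Import all_boot all_order all_algebra.
From mathcomp Require Import all_classical all_reals all_analysis.
From mathcomp Require Import measurable_realfun.
From mathcomp Require Import zify ring lra.
Import Pilot.Defs.
Set Implicit Arguments. Unset Strict Implicit. Unset Printing Implicit Defensive.
Local Open Scope classical_set_scope.

Definition parcl (G : rnet) := forall v w, vset G v -> par G v = Some w -> vset G w.

Definition wFT (G : rnet) : Prop :=
  vset G (root G) /\ parcl G /\
  (forall v k, vset G v -> (0 < k)%N -> anc G k v <> Some v) /\
  (forall v, vset G v -> finite_set [set w | vset G w /\ par G w = Some v]).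

Lemma FT_wFT G : is_family_tree G -> wFT G.
Proof. by case=> [h1 [h2 [h3 [h4 _]]]]; split. Qed.

Lemma within_vset G r o v : within G r o v -> vset G v.
Proof.
elim: r v => [|r IH] v /=; first by case=> ->.
by case=> [/IH //|[w [_ [_ [? _]]]]].
Qed.

Lemma within_root G r o v : within G r o v -> vset G o.
Proof.
elim: r v => [|r IH] v /=; first by case.
by case=> [/IH //|[w [/IH ? _]]].
Qed.

Lemma within_S G r o v : within G r o v -> within G r.+1 o v.
Proof. by left. Qed.

Lemma within_mono G r s o v : (r <= s)%N -> within G r o v -> within G s o v.
Proof.
move=> /subnK <-; elim: (s - r)%N => [|n IH] // h.
by rewrite addSn; left; exact: IH.
Qed.

Lemma within_refl G r o : vset G o -> within G r o o.
Proof. move=> h; apply: (@within_mono G 0) => //. Qed.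

Lemma adj_sym G u v : adj G u v -> adj G v u.
Proof. by case=> [a [b [c|c]]]; split=> //; split=> //; [right|left]. Qed.

Lemma within_step G r o w v : within G r o w -> adj G w v -> within G r.+1 o v.
Proof. by move=> h1 h2; right; exists w. Qed.

Lemma within_trans G r s o u v :
  within G r o u -> within G s u v -> within G (r + s) o v.
Proof.
move=> hu; elim: s v => [|s IH] v /=.
  by case=> -> _; rewrite addn0.
case=> [/IH h|[w [/IH h1 h2]]]; rewrite addnS; first by left.
by right; exists w.
Qed.

Lemma within_sym G r o v : within G r o v -> within G r v o.
Proof.
elim: r v => [|r IH] v /=; first by case=> -> ?; split.
case=> [/IH h|[w [/IH h1 h2]]]; first by left.
have h3 : within G 1 v w.
  by right; exists v; split; [split=> //; case: h2 => _ [] |exact: adj_sym].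
by have := within_trans h3 h1; rewrite add1n.
Qed.

Lemma anc_add G m n v : anc G (m + n) v = obind (anc G m) (anc G n v).
Proof.
elim: m => [|m IH] /=; first by case: (anc G n v).
by rewrite IH; case: (anc G n v).
Qed.

Lemma anc1 G v : anc G 1 v = par G v. Proof. by []. Qed.

Lemma ancS G k v : anc G k.+1 v = obind (anc G k) (par G v).
Proof. by rewrite -addn1 anc_add. Qed.

Lemma anc_vset G k v w : parcl G -> vset G v -> anc G k v = Some w -> vset G w.
Proof.
move=> pc; elim: k w => [|k IH] w /=; first by move=> ? [<-].
case e: (anc G k v) => [b|] //= hv hb; exact: pc (IH _ hv e) hb.
Qed.

Lemma anc_within G k v w : parcl G -> vset G v -> anc G k v = Some w ->
  within G k v w.
Proof.
move=> pc hv; elim: k w => [|k IH] w /=; first by case=> <-.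
case e: (anc G k v) => [b|] //= hb; right; exists b; split; first exact: IH.
have vb := anc_vset pc hv e.
by split=> //; split; [exact: pc hb|left].
Qed.

Lemma anc_pred G k v w : anc G k.+1 v = Some w -> exists b, anc G k v = Some b /\ par G b = Some w.
Proof. by rewrite /=; case: (anc G k v) => [b|] //= h; exists b. Qed.

Lemma common_anc G r o v : within G r o v ->
  exists i m c, (i + m <= r)%N /\ anc G i o = Some c /\ anc G m v = Some c.
Proof.
elim: r v => [|r IH] v /=.
  by case=> -> _; exists 0%N, 0%N, o.
case=> [/IH [i [m [c [h1 [h2 h3]]]]]|[w [/IH [i [m [c [h1 [h2 h3]]]]] [_ [_ [hp|hp]]]]]].
- by exists i, m, c; split=> //; lia.
- case: m h1 h3 => [|m] h1 h3.
    move: h3 => /= [ec]; subst w.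
    exists i.+1, 0%N, v; split; first by lia.
    by split=> //=; rewrite h2.
  exists i, m, c; split; first by lia.
  by split=> //; move: h3; rewrite ancS hp.
- exists i, m.+1, c; split; first by lia.
  by split=> //; rewrite ancS hp.
Qed.

Lemma anc_uniq G p q v c : (forall x k, vset G x -> (0 < k)%N -> anc G k x <> Some x) ->
  vset G c -> anc G p v = Some c -> anc G q v = Some c -> p = q.
Proof.
move=> ac vc; wlog: p q / (p <= q)%N.
  move=> W h1 h2; case: (leqP p q) => h; first exact: W.
  by apply/esym/W => //; exact: ltnW.
move=> le hp hq; apply/eqP; rewrite eqn_leq le /=; rewrite leqNgt; apply/negP => lt.
have := anc_add G (q - p) p v; rewrite subnK // hp /= hq => /esym.
by apply: ac => //; rewrite subn_gt0.
Qed.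

Definition BI (G : rnet) (o : nat) (H : rnet) (p : nat) (r : nat)
  (f g : nat -> nat) : Prop :=
    (forall v, within G r o v -> within H r p (f v) /\ g (f v) = v) /\
    (forall w, within H r p w -> within G r o (g w) /\ f (g w) = w) /\
    f o = p /\
    (forall u v, within G r o u -> within G r o v ->
       (par G u = Some v <-> par H (f u) = Some (f v))).

Lemma ball_isoE G o H p r f : ball_iso G o H p r f <-> exists g, BI G o H p r f g.
Proof. by []. Qed.

Definition HOM (G : rnet) (o : nat) (H : rnet) (p : nat) (r : nat) (f : nat -> nat) :=
  (forall v, within G r o v -> within H r p (f v)) /\
  (vset G o -> f o = p) /\
  (forall u v, within G r o u -> within G r o v -> par G u = Some v ->
     par H (f u) = Some (f v)).

Lemma hom_within G o H p R f s v : HOM G o H p R f -> (s <= R)%N ->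
  within G s o v -> within H s p (f v).
Proof.
move=> [h1 [h2 h3]] sR; elim: s sR v => [|s IH] sR v /=.
  case=> -> vo; rewrite h2 //; split=> //.
  by have := h1 o (within_refl R vo); rewrite h2 // => /within_vset.
have sR' : (s <= R)%N by lia.
case=> [hh|[w [hw [vw [vv hp]]]]]; first by left; exact: IH.
right; exists (f w); split; first exact: IH.
have wR : within G R o w by apply: within_mono hw; lia.
have vR : within G R o v by apply: (within_mono sR); right; exists w; split=> //; split.
split; first exact: within_vset (h1 _ wR).
split; first exact: within_vset (h1 _ vR).
by case: hp => hp; [left|right]; apply: h3.
Qed.

Lemma BI_homf G o H p R f g : BI G o H p R f g -> HOM G o H p R f.
Proof.
move=> [h1 [h2 [h3 h4]]]; split; first by move=> v /h1 [].
split=> // u v hu hv; exact: (h4 u v hu hv).1.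
Qed.

Lemma BI_homg G o H p R f g : BI G o H p R f g -> HOM H p G o R g.
Proof.
move=> [h1 [h2 [h3 h4]]]; split; first by move=> v /h2 [].
split.
  move=> vp; have /h2 [wg _] := within_refl R vp.
  have /h1 [_ <-] := within_refl R (within_root wg); by rewrite h3.
move=> u v hu hv hp; have [gu fu] := h2 _ hu; have [gv fv] := h2 _ hv.
by apply/(h4 _ _ gu gv); rewrite fu fv.
Qed.

Lemma BI_restrict G o H p R f g s : (s <= R)%N -> BI G o H p R f g -> BI G o H p s f g.
Proof.
move=> sR B; have hf := BI_homf B; have hg := BI_homg B.
case: B => [h1 [h2 [h3 h4]]].
split.
  move=> v hv; split; first exact: hom_within hf sR hv.
  by case: (h1 v (within_mono sR hv)).
split.
  move=> w hw; split; first exact: hom_within hg sR hw.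
  by case: (h2 w (within_mono sR hw)).
split=> // u v hu hv; apply: h4; exact: within_mono hu || exact: within_mono hv.
Qed.

Lemma BI_sym G o H p R f g : BI G o H p R f g -> exists g', BI H p G o R g' f.
Proof.
move=> B; case: (pselect (vset G o)) => vo.
  have hg := BI_homg B; case: B => [h1 [h2 [h3 h4]]].
  exists g; split=> //; split=> //; split.
    have /h1 [] := within_refl R vo; rewrite h3 => _ //.
  move=> u v hu hv; have [gu fu] := h2 _ hu; have [gv fv] := h2 _ hv.
  by rewrite (h4 _ _ gu gv) fu fv.
exists (fun=> o); case: B => [h1 [h2 [h3 h4]]]; split.
  by move=> w /h2 [/within_root].
split; first by move=> v /within_root.
by split=> // u v /h2 [/within_root].
Qed.

Lemma BI_comp G o H p K q R f g f' g' : BI G o H p R f g -> BI H p K q R f' g' ->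
  BI G o K q R (f' \o f) (g \o g').
Proof.
move=> [h1 [h2 [h3 h4]]] [k1 [k2 [k3 k4]]]; split.
  move=> v /h1 [/k1 [a b] c]; split=> //=; by rewrite b.
split.
  move=> w /k2 [/h2 [a b] c]; split=> //=; by rewrite b.
split; first by rewrite /= h3.
move=> u v hu hv; rewrite (h4 _ _ hu hv); apply: k4; first by case: (h1 _ hu).
by case: (h1 _ hv).
Qed.

Lemma ball_iso_sym G o H p R f : ball_iso G o H p R f -> exists f', ball_iso H p G o R f'.
Proof. by move=> [g /BI_sym [g' B]]; exists g', f. Qed.

Lemma ball_iso_comp G o H p K q R f f' : ball_iso G o H p R f -> ball_iso H p K q R f' ->
  ball_iso G o K q R (f' \o f).
Proof. by move=> [g B] [g' B']; exists (g \o g'); exact: BI_comp B B'. Qed.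

Lemma ball_iso_restrict G o H p R f s : (s <= R)%N -> ball_iso G o H p R f -> ball_iso G o H p s f.
Proof. by move=> sR [g B]; exists g; exact: BI_restrict B. Qed.

Definition DT (G : rnet) (a : nat) := desc_tree (reroot G a).

Lemma anc_par G G' : par G =1 par G' -> forall k v, anc G k v = anc G' k v.
Proof. by move=> e; elim=> [|k IH] v //=; rewrite IH; case: (anc G' k v) => //= x; rewrite e. Qed.

Lemma anc_reroot G a k v : anc (reroot G a) k v = anc G k v.
Proof. exact: anc_par. Qed.

Lemma vset_DT G a v : vset (DT G a) v <-> vset G v /\ exists k, anc G k v = Some a.
Proof.
rewrite /DT /desc_tree /= /is_desc; split; case=> h [k hk]; split=> //; exists k;
  by rewrite ?anc_reroot // -(anc_reroot G a).
Qed.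

Lemma par_DT G a v : par (DT G a) v = if v == a then None else par G v.
Proof. by []. Qed.

Lemma root_DT G a : root (DT G a) = a. Proof. by []. Qed.

Lemma within_sub G G' t u v : (forall x, vset G x -> vset G' x) ->
  (forall x y, vset G x -> par G x = Some y -> par G' x = Some y) ->
  within G t u v -> within G' t u v.
Proof.
move=> hv hp; elim: t v => [|t IH] v /=; first by case=> -> /hv.
case=> [/IH|[w [/IH h [a [b c]]]]]; first by left.
right; exists w; split=> //; split; first exact: hv.
by split; [exact: hv|case: c => c; [left|right]; apply: hp].
Qed.

Lemma within_DT_sub G a t u v : within (DT G a) t u v -> within G t u v.
Proof.
apply: within_sub; first by move=> x /vset_DT [].
by move=> x y _; rewrite par_DT; case: (x == a).
Qed.

Lemma desc_par G a w p k : anc G k w = Some a -> w <> a -> par G w = Some p ->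
  exists k', anc G k' p = Some a.
Proof.
case: k => [[/esym]//|k]; rewrite ancS => + _ hp; rewrite hp /= => h; by exists k.
Qed.

Lemma desc_child G a v w k : anc G k w = Some a -> par G v = Some w ->
  anc G k.+1 v = Some a.
Proof. by move=> h hp; rewrite ancS hp. Qed.

Lemma hom_anc G o G' o' R f s k u a : HOM G o G' o' R f -> parcl G ->
  within G s o u -> (s + k <= R)%N -> anc G k u = Some a -> anc G' k (f u) = Some (f a).
Proof.
move=> hf pc hu; elim: k a => [|k IH] a skR /=; first by case=> <-.
case e: (anc G k u) => [b|] //= hb.
have skR' : (s + k <= R)%N by lia.
rewrite (IH b skR' e) /=.
have vu := within_vset hu.
have wb : within G (s + k) o b := within_trans hu (anc_within pc vu e).
have wa : within G (s + k).+1 o a.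
  right; exists b; split=> //; split; first exact: within_vset wb.
  by split; [exact: pc (within_vset wb) hb|left].
case: hf => _ [_ h3]; apply: h3 => //; apply: within_mono wb || apply: within_mono wa; lia.
Qed.

Lemma GL_hom G o G' o' R f s k r u a :
  HOM G o G' o' R f -> parcl G -> within G s o u -> anc G k u = Some a ->
  (s + k <= R)%N -> (s + r <= R)%N ->
  (forall v, within G R o v -> f v = f a -> v = a) ->
  forall v, within (DT G a) r u v -> within (DT G' (f a)) r (f u) (f v).
Proof.
move=> hf pc hu hk skR srR inj.
have hfa := hom_anc hf pc hu skR hk.
have wa : within G R o a.
  apply: (@within_mono _ (s + k)); first by [].
  exact: within_trans hu (anc_within pc (within_vset hu) hk).
have wR t x : (t <= r)%N -> within (DT G a) t u x -> within G R o x.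
  move=> tr /within_DT_sub hx; apply: (@within_mono _ (s + t)); first lia.
  exact: within_trans hu hx.
have hvR x : within G R o x -> vset G' (f x) by move=> /(proj1 hf) /within_vset.
have parR x y : within G R o x -> within G R o y -> par G x = Some y -> par G' (f x) = Some (f y).
  by move=> hx hy; apply: (proj2 (proj2 hf)).
have neq x : within G R o x -> x <> a -> f x <> f a by move=> hx ne /(inj _ hx).
suff: forall t, (t <= r)%N -> forall v, within (DT G a) t u v ->
   within (DT G' (f a)) t (f u) (f v) by move=> /(_ r (leqnn r)).
elim=> [|t IH] tr v /=.
  case=> -> /vset_DT [vu _]; split=> //; apply/vset_DT; split.
    by apply: hvR; apply: within_mono hu; lia.
  by exists k.
have tr' : (t <= r)%N by lia.
case=> [/(IH tr') h|[w [hw hadj]]]; first by left.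
have wv : within (DT G a) t.+1 u v by right; exists w.
have wRw := wR t w tr' hw; have wRv := wR t.+1 v tr wv.
have := IH tr' w hw => hw'.
right; exists (f w); split=> //.
case: hadj => /vset_DT [vw [kw dw]] [/vset_DT [vv [kv dv]] hp].
have dfw : exists k, anc G' k (f w) = Some (f a).
  by case/vset_DT: (within_vset hw') => _.
case: dfw => kfw dfw.
rewrite !par_DT in hp.
case: hp => hp.
- case: eqP hp => // wa' hp.
  have fwa : f w <> f a := neq _ wRw wa'.
  have pf := parR _ _ wRw wRv hp.
  split; first exact: within_vset hw'.
  split; last by left; rewrite par_DT; case: eqP.
  apply/vset_DT; split; first exact: hvR.
  exact: desc_par dfw fwa pf.
- case: eqP hp => // va' hp.
  have fva : f v <> f a := neq _ wRv va'.
  have pf := parR _ _ wRv wRw hp.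
  split; first exact: within_vset hw'.
  split; last by right; rewrite par_DT; case: eqP.
  apply/vset_DT; split; first exact: hvR.
  by exists kfw.+1; exact: desc_child dfw pf.
Qed.

Lemma GL G o G' o' R f g s k r u a : BI G o G' o' R f g -> parcl G -> parcl G' ->
  within G s o u -> anc G k u = Some a -> (s + k <= R)%N -> (s + r <= R)%N ->
  BI (DT G a) u (DT G' (f a)) (f u) r f g.
Proof.
move=> B pc pc' hu hk skR srR.
have hf := BI_homf B; have hg := BI_homg B.
have wa : within G R o a.
  apply: (@within_mono _ (s + k)); first by [].
  exact: within_trans hu (anc_within pc (within_vset hu) hk).
case: (B) => [h1 [h2 [h3 h4]]].
have gfa : g (f a) = a by case: (h1 _ wa).
have uR : within G R o u by apply: within_mono hu; lia.
have gfu : g (f u) = u by case: (h1 _ uR).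
have hu' : within G' s o' (f u) by apply: hom_within hf _ hu; lia.
have hk' := hom_anc hf pc hu skR hk.
have wR t x : (t <= r)%N -> within (DT G a) t u x -> within G R o x.
  move=> tr /within_DT_sub hx; apply: (@within_mono _ (s + t)); first lia.
  exact: within_trans hu hx.
have wR' x : within (DT G' (f a)) r (f u) x -> within G' R o' x.
  move=> /within_DT_sub hx; apply: (@within_mono _ (s + r)) => //.
  exact: within_trans hu' hx.
have injf v : within G R o v -> f v = f a -> v = a.
  by move=> hv e; have [_ <-] := h1 _ hv; rewrite e gfa.
have injg w : within G' R o' w -> g w = g (f a) -> w = f a.
  move=> hw e; have [_ <-] := h2 _ hw; rewrite e.
  by have [_ ->] := h1 _ wa.
split.
  move=> v hv; split; first exact: GL_hom hf pc hu hk skR srR injf v hv.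
  by case: (h1 _ (wR r v (leqnn r) hv)).
split.
  move=> w hw; split; last by case: (h2 _ (wR' w hw)).
  have := GL_hom hg pc' hu' hk' skR srR injg hw.
  by rewrite gfa gfu.
split=> // x y hx hy; rewrite !par_DT.
have xR := wR r x (leqnn r) hx; have yR := wR r y (leqnn r) hy.
have -> : (f x == f a) = (x == a).
  apply/eqP/eqP => [/injf -> //|-> //].
case: (x == a) => //; exact: h4.
Qed.

Lemma ball_iso_DT G o G' o' R f s k r u a : ball_iso G o G' o' R f -> parcl G -> parcl G' ->
  within G s o u -> anc G k u = Some a -> (s + k <= R)%N -> (s + r <= R)%N ->
  ball_iso (DT G a) u (DT G' (f a)) (f u) r f.
Proof. move=> [g B] *; exists g; apply: GL B _ _ _ _ _ _; eassumption. Qed.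

Lemma within_eqv G G' t u v : (forall x, vset G x <-> vset G' x) ->
  (forall x, vset G x -> par G x = par G' x) ->
  within G t u v <-> within G' t u v.
Proof.
move=> hv hp; split; apply: within_sub.
- by move=> x /hv.
- by move=> x y /hp ->.
- by move=> x /hv.
- by move=> x y /hv /hp ->.
Qed.

Lemma ball_iso_congr G G' o H p r f :
  (forall v, within G r o v <-> within G' r o v) ->
  (forall u v, within G r o u -> within G r o v -> (par G u = Some v <-> par G' u = Some v)) ->
  ball_iso G o H p r f -> ball_iso G' o H p r f.
Proof.
move=> hw hp [g [h1 [h2 [h3 h4]]]]; exists g; split.
  by move=> v /hw /h1.
split; first by move=> w /h2 [/hw].
split=> // u v /hw hu /hw hv; rewrite -(hp _ _ hu hv); exact: h4.
Qed.

Lemma ball_iso_eqv G G' o H p r f : (forall x, vset G x <-> vset G' x) ->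
  (forall x, vset G x -> par G x = par G' x) ->
  ball_iso G o H p r f <-> ball_iso G' o H p r f.
Proof.
move=> hv hp; have he t u v := within_eqv t u v hv hp.
split; apply: ball_iso_congr => //.
- by move=> u v /within_vset /hp ->.
- by move=> v; rewrite he.
- by move=> u v /within_vset /hv /hp ->.
Qed.

Definition acyc G := forall v k, vset G v -> (0 < k)%N -> anc G k v <> Some v.

Lemma no_par_desc G a w m : acyc G -> vset G a -> anc G m w = Some a -> par G a = Some w -> False.
Proof. by move=> ac va hm hp; apply: (ac a m.+1 va) => //; rewrite ancS hp. Qed.


Lemma anc_after_top G J o a m : anc G J o = Some a -> par G a = None -> (J < m)%N ->
  anc G m o = None.
Proof.
move=> hJ hp lt; have := anc_add G (m - J.+1) J.+1 o.
by rewrite subnK // /= hJ /= hp.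
Qed.

Lemma within_desc G r o v J a : within G r o v -> anc G J o = Some a ->
  (J <= r)%N -> (J = r \/ par G a = None) -> exists m, anc G m v = Some a.
Proof.
move=> /common_anc [i [m [c [im [hi hm]]]]] hJ Jr top.
case: (leqP i J) => iJ.
  exists (J - i + m)%N; rewrite anc_add hm /=.
  by have := anc_add G (J - i) i o; rewrite subnK // hi /= hJ.
case: top => [eJ|top]; first lia.
by have := anc_after_top hJ top iJ; rewrite hi.
Qed.

Lemma BL G o r J a : acyc G -> parcl G -> vset G o -> anc G J o = Some a -> (J <= r)%N ->
  (J = r \/ par G a = None) ->
  (forall v, within G r o v <-> within (DT G a) r o v) /\
  (forall u v, within G r o u -> within G r o v -> (par G u = Some v <-> par (DT G a) u = Some v)).
Proof.
move=> ac pc vo hJ Jr top.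
have va : vset G a := anc_vset pc vo hJ.
have dsc v t : (t <= r)%N -> within G t o v -> exists m, anc G m v = Some a.
  by move=> tr hv; apply: (within_desc (within_mono tr hv) hJ).
have parE u v : within G r o u -> within G r o v -> (par G u = Some v <-> par (DT G a) u = Some v).
  move=> hu hv; rewrite par_DT; case: eqP => [->|//]; split=> // hp.
  by have [m hm] := dsc v r (leqnn r) hv; case: (no_par_desc ac va hm hp).
split=> // v; split; last by move/within_DT_sub.
suff: forall t, (t <= r)%N -> forall v, within G t o v -> within (DT G a) t o v by apply.
elim=> [|t IH] tr {}v /=.
  case=> -> _; split=> //; apply/vset_DT; split=> //; by exists J.
have tr' : (t <= r)%N by lia.
case=> [h|[w [hw [vw [vv hp]]]]]; first by left; apply: IH.
right; exists w; split; first exact: IH.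
have wv : within G t.+1 o v by right; exists w; split=> //; split.
have wr : within G r o w by apply: within_mono hw; lia.
have vr : within G r o v by apply: within_mono wv; lia.
split; first by apply/vset_DT; split=> //; exact: dsc hw.
split; first by apply/vset_DT; split=> //; exact: dsc wv.
by case: hp => hp; [left; apply/(parE _ _ wr vr) | right; apply/(parE _ _ vr wr)].
Qed.

Lemma wFT_reroot X u : wFT X -> vset X u -> wFT (reroot X u).
Proof.
case=> [h1 [h2 [h3 h4]]] vu; split=> //; split=> //; split=> // v k vv k0.
by rewrite anc_reroot; exact: h3.
Qed.

Lemma ancT1 X k v w : anc (desc_tree X) k v = Some w -> anc X k v = Some w.
Proof.
elim: k w => [|k IH] w //=.
case e: (anc (desc_tree X) k v) => [b|] //=; rewrite (IH _ e) /=.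
by case: (b == root X).
Qed.

Lemma ancT2 X k v w m : acyc X -> vset X (root X) -> anc X k v = Some w ->
  anc X m w = Some (root X) -> anc (desc_tree X) k v = Some w.
Proof.
move=> ac vo; elim: k w m => [|k IH] w m //=.
case e: (anc X k v) => [b|] //= hb hm.
have hb' : anc X m.+1 b = Some (root X) by rewrite ancS hb.
rewrite (IH _ _ e hb') /=; case: eqP => [eb|//].
by exfalso; apply: (ac (root X) m.+1 vo) => //; rewrite -{1}eb.
Qed.

Lemma wFT_desc X : wFT X -> wFT (desc_tree X).
Proof.
case=> [vo [pc [ac lf]]]; split; first by split=> //; exists 0%N.
split.
  move=> v w /= [vv [k hk]]; case: eqP => // vo' hp; split; first exact: pc hp.
  exact: desc_par hk vo' hp.
split.
  by move=> v k /= [vv _] k0 /ancT1; apply: ac.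
move=> v [vv _]; apply: sub_finite_set (lf v vv) => w /= [[vw _]].
by case: (w == root X).
Qed.

Definition Eb (H : rnet) r (G : rnet) a o := exists f, ball_iso (DT G a) o H (root H) r f.
Definition Pk H r k (G : rnet) (u : nat) := anc G k (root G) = Some u /\ Eb H r G u (root G).
Definition Qj H r j (G : rnet) (u : nat) :=
  exists a, anc G j (root G) = Some a /\ par G a = Some u /\ Eb H r G a (root G).
Definition Sk H r k (T : rnet) (u : nat) := vset T u /\ anc T k u = Some (root T) /\ Eb H r T (root T) u.
Definition Sj H r j (T : rnet) (u : nat) := vset T u /\
  exists a, anc T j u = Some a /\ par T a = Some (root T) /\ Eb H r T a u.

Lemma swapP H r k X u : wFT X -> vset X u ->
  (Pk H r k (reroot X u) (root X) <-> Sk H r k (desc_tree X) u).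
Proof.
case=> [vo [pc [ac lf]]] vu; rewrite /Pk /Sk /Eb /= anc_reroot.
have eqv f : ball_iso (DT (reroot X u) (root X)) u H (root H) r f <->
             ball_iso (DT (desc_tree X) (root X)) u H (root H) r f.
  apply: ball_iso_eqv.
    move=> x; rewrite !vset_DT /=; split.
      case=> vx [k' hk']; rewrite anc_reroot in hk'.
      split; first by split=> //; exists k'.
      by exists k'; apply: ancT2 hk' (_ : anc X 0 _ = _).
    case=> [[vx _] [k' hk']]; split=> //; exists k'; rewrite anc_reroot; exact: ancT1.
  by move=> x _; rewrite !par_DT /=; case: (x == root X).
split.
  case=> h1 h2; split; first by split=> //; exists k.
  split; first exact: ancT2 h1 (_ : anc X 0 _ = _).
  by case: h2 => f /eqv hf; exists f.
case=> _ [h1 h2]; split; first exact: ancT1.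
by case: h2 => f /eqv hf; exists f.
Qed.

Lemma swapQ H r j X u : wFT X -> vset X u ->
  (Qj H r j (reroot X u) (root X) <-> Sj H r j (desc_tree X) u).
Proof.
case=> [vo [pc [ac lf]]] vu; rewrite /Qj /Sj /Eb /=.
have key a : par X a = Some (root X) ->
  (forall f, ball_iso (DT (reroot X u) a) u H (root H) r f <->
             ball_iso (DT (desc_tree X) a) u H (root H) r f).
  move=> pa f; apply: ball_iso_eqv.
    move=> x; rewrite !vset_DT /=; split.
      case=> vx [k' hk']; rewrite anc_reroot in hk'.
      split; first by split=> //; exists k'.+1; rewrite /= hk'.
      by exists k'; apply: ancT2 hk' (_ : anc X 1 _ = _).
    case=> [[vx _] [k' hk']]; split=> //; exists k'; rewrite anc_reroot; exact: ancT1.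
  move=> x /vset_DT [vx [k' hk']]; rewrite anc_reroot in hk'; rewrite !par_DT /=; case: (x == a) => //.
  case: eqP => // xo; exfalso.
  have va : vset X a := anc_vset pc vx hk'.
  by apply: (no_par_desc ac va (_ : anc X k' (root X) = _) pa); rewrite -xo.
split.
- case=> a [h1 [h2 h3]].
  have vT : vset (desc_tree X) u.
    split=> //; exists j.+1; rewrite anc_reroot in h1; by rewrite /= h1.
  split=> //; exists a.
  have pa : par X a = Some (root X) by [].
  have aneq : a <> root X by move=> e; rewrite e in pa; exact: (ac _ 1%N vo _ pa).
  split; first by rewrite anc_reroot in h1; exact: ancT2 h1 (_ : anc X 1 _ = _).
  split; first by rewrite /=; case: eqP.
  by case: h3 => f /(key a pa) hf; exists f.
- case=> _ [a [h1 [h2 h3]]]; exists a.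
  have pa : par X a = Some (root X).
    by move: h2; rewrite /=; case: (a == root X).
  split; first by rewrite anc_reroot; exact: ancT1.
  split; first by [].
  by case: h3 => f /(key a pa) hf; exists f.
Qed.

Definition loc2 (N : nat) (P : rnet -> nat -> Prop) := forall G G' f g u, wFT G -> wFT G' ->
  BI G (root G) G' (root G') N f g -> within G N (root G) u -> P G u -> P G' (f u).
Definition bnd2 (N : nat) (P : rnet -> nat -> Prop) := forall G u, wFT G -> P G u ->
  within G N (root G) u.
Definition loc1 (N : nat) (P : rnet -> Prop) := forall G G' f g, wFT G -> wFT G' ->
  BI G (root G) G' (root G') N f g -> P G -> P G'.

Lemma EbT H r G o G' o' N f g s k c a : BI G o G' o' N f g -> parcl G -> parcl G' ->
  within G s o c -> anc G k c = Some a -> (s + k <= N)%N -> (s + r <= N)%N ->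
  Eb H r G a c -> Eb H r G' (f a) (f c).
Proof.
move=> B pc pc' hc hk skN srN [f1 hf1].
have := ball_iso_DT (ex_intro _ g B) pc pc' hc hk skN srN.
move=> /ball_iso_sym [f2 hf2]; exists (f1 \o f2); exact: ball_iso_comp hf2 hf1.
Qed.

Lemma wFT_parcl G : wFT G -> parcl G. Proof. by case=> _ []. Qed.
Lemma wFT_acyc G : wFT G -> acyc G. Proof. by case=> _ [_ []]. Qed.
Lemma wFT_root G : wFT G -> vset G (root G). Proof. by case. Qed.

Lemma BI_root G o G' o' N f g : BI G o G' o' N f g -> f o = o'.
Proof. by case=> _ [_ []]. Qed.

Lemma loc_Pk H r k N : (k <= N)%N -> (r <= N)%N -> loc2 N (Pk H r k).
Proof.
move=> kN rN G G' f g u wG wG' B _ [h1 h2].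
have pc := wFT_parcl wG; have pc' := wFT_parcl wG'.
have h0 : within G 0 (root G) (root G) by split=> //; exact: wFT_root.
split.
  by rewrite -(BI_root B); apply: hom_anc (BI_homf B) pc h0 _ h1.
by rewrite -(BI_root B); apply: EbT B pc pc' h0 h1 _ _ h2.
Qed.

Lemma bnd_Pk H r k N : (k <= N)%N -> bnd2 N (Pk H r k).
Proof.
move=> kN G u wG [h1 _]; apply: within_mono kN _.
exact: anc_within (wFT_parcl wG) (wFT_root wG) h1.
Qed.

Lemma loc_Qj H r j N : (j.+1 <= N)%N -> (r <= N)%N -> loc2 N (Qj H r j).
Proof.
move=> jN rN G G' f g u wG wG' B _ [a [h1 [h2 h3]]].
have pc := wFT_parcl wG; have pc' := wFT_parcl wG'.
have vo := wFT_root wG.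
have h0 : within G 0 (root G) (root G) by split.
have hu : anc G j.+1 (root G) = Some u by rewrite /= h1.
exists (f a); split.
  by rewrite -(BI_root B); apply: hom_anc (BI_homf B) pc h0 _ h1; lia.
split.
  have wa : within G N (root G) a.
    by apply: (@within_mono _ j); [lia|exact: anc_within pc vo h1].
  have wu : within G N (root G) u by apply: within_mono jN _; exact: anc_within pc vo hu.
  by apply/(proj2 (proj2 (proj2 B)) a u wa wu).
by rewrite -(BI_root B); apply: EbT B pc pc' h0 h1 _ _ h3; lia.
Qed.

Lemma bnd_Qj H r j N : (j.+1 <= N)%N -> bnd2 N (Qj H r j).
Proof.
move=> jN G u wG [a [h1 [h2 _]]]; apply: within_mono jN _.
by apply: anc_within (wFT_parcl wG) (wFT_root wG) _; rewrite /= h1.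
Qed.

Lemma loc_Sk H r k N : (k + k <= N)%N -> (k + r <= N)%N -> loc2 N (Sk H r k).
Proof.
move=> kN rN G G' f g u wG wG' B wu [_ [h1 h2]].
have pc := wFT_parcl wG; have pc' := wFT_parcl wG'.
have vu := within_vset wu.
have hk : within G k (root G) u := within_sym (anc_within pc vu h1).
split; first by apply: within_vset (proj1 (BI_homf B) _ wu).
split.
  by rewrite -(BI_root B); apply: hom_anc (BI_homf B) pc hk _ h1.
by rewrite -(BI_root B); apply: EbT B pc pc' hk h1 _ _ h2.
Qed.

Lemma bnd_Sk H r k N : (k <= N)%N -> bnd2 N (Sk H r k).
Proof.
move=> kN G u wG [vu [h1 _]]; apply: within_mono kN _.
exact: within_sym (anc_within (wFT_parcl wG) vu h1).
Qed.

Lemma loc_Sj H r j N : (j.+1 + j <= N)%N -> (j.+1 + r <= N)%N -> loc2 N (Sj H r j).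
Proof.
move=> jN rN G G' f g u wG wG' B wu [vu [a [h1 [h2 h3]]]].
have pc := wFT_parcl wG; have pc' := wFT_parcl wG'.
have hu1 : anc G j.+1 u = Some (root G) by rewrite /= h1.
have hk : within G j.+1 (root G) u := within_sym (anc_within pc vu hu1).
split; first by apply: within_vset (proj1 (BI_homf B) _ wu).
exists (f a); split; first by apply: hom_anc (BI_homf B) pc hk _ h1; lia.
split.
  have wa : within G N (root G) a.
    apply: (@within_mono _ (j.+1 + j)) => //; exact: within_trans hk (anc_within pc vu h1).
  have wo : within G N (root G) (root G) by apply: within_refl; exact: wFT_root.
  by rewrite -(BI_root B); apply/(proj2 (proj2 (proj2 B)) a (root G) wa wo).
by apply: EbT B pc pc' hk h1 _ _ h3; lia.
Qed.

Lemma bnd_Sj H r j N : (j.+1 <= N)%N -> bnd2 N (Sj H r j).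
Proof.
move=> jN G u wG [vu [a [h1 [h2 _]]]]; apply: within_mono jN _.
by apply: within_sym (anc_within (wFT_parcl wG) vu _); rewrite /= h1.
Qed.

Definition PD H s (G : rnet) := exists f, ball_iso (desc_tree G) (root G) H (root H) s f.

Lemma PD_Eb H s G : PD H s G <-> Eb H s G (root G) (root G).
Proof. by case: G. Qed.

Lemma loc_PD H s N : (s <= N)%N -> loc1 N (PD H s).
Proof.
move=> sN G G' f g wG wG' B /PD_Eb h; apply/PD_Eb.
have h0 : within G 0 (root G) (root G) by split=> //; exact: wFT_root.
rewrite -(BI_root B).
exact: EbT B (wFT_parcl wG) (wFT_parcl wG') h0 (_ : anc G 0 _ = _) _ sN h.
Qed.

Lemma loc1_ex N P : loc2 N P -> bnd2 N P -> loc1 N (fun G => exists u, P G u).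
Proof.
move=> hl hb G G' f g wG wG' B [u hu]; exists (f u).
exact: hl B (hb _ _ wG hu) hu.
Qed.

Lemma ball_finite G o N : wFT G -> finite_set [set v | within G N o v].
Proof.
move=> [_ [pc [_ lf]]]; elim: N => [|N IH].
  apply: (@sub_finite_set _ _ [set o]); last exact: finite_set1.
  by move=> v /= [->].
set B := [set v | within G N o v].
apply: (@sub_finite_set _ _ (B `|` ((fun w => odflt 0%N (par G w)) @` B `|`
   \bigcup_(w in B) [set v | vset G v /\ par G v = Some w]))).
  move=> v /= [hv|[w [hw [vw [vv hp]]]]]; first by left.
  right; case: hp => hp; first by left; exists w => //; rewrite hp.
  by right; exists w.
rewrite !finite_setU; split=> //; split; first exact: finite_image.
apply: bigcup_finite => // w hw; apply: lf; exact: within_vset hw.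
Qed.

Definition code := (seq nat * seq (nat * nat) * nat)%type.
Definition dec (c : code) : rnet :=
  RNet [set v | v \in c.1.1] (fun v => ohead [seq q.2 | q <- c.1.2 & q.1 == v]) c.2.

Lemma ohead_iff (l : seq nat) (P : nat -> Prop) y :
  (forall x, x \in l <-> P x) -> (forall x x', P x -> P x' -> x = x') ->
  (ohead l = Some y <-> P y).
Proof.
move=> hl hf; case: l hl => [|x l] hl /=.
  by split=> // /hl.
have Px : P x by apply/hl; rewrite inE eqxx.
by split=> [[<-] //|/(hf _ _ Px) ->].
Qed.

Lemma ohead_mem (l : seq nat) y : ohead l = Some y -> y \in l.
Proof. by case: l => //= x l [->]; rewrite inE eqxx. Qed.

Lemma anc_sub D G k v w : (forall x y, par D x = Some y -> par G x = Some y) ->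
  anc D k v = Some w -> anc G k v = Some w.
Proof.
move=> hp; elim: k w => [|k IH] w //=.
case e: (anc D k v) => [b|] //= hb; by rewrite (IH _ e) /=; apply: hp.
Qed.

Lemma code_exists G N : wFT G -> exists c : code,
  root (dec c) = root G /\ wFT (dec c) /\ BI G (root G) (dec c) (root (dec c)) N id id.
Proof.
move=> wG; case/finite_seqP: (ball_finite (root G) N wG) => s hs.
have pc := wFT_parcl wG.
pose e := [seq q <- [seq (x, y) | x <- s, y <- s] | par G q.1 == Some q.2].
pose c : code := (s, e, root G).
have ins v : v \in s <-> within G N (root G) v.
  by have := congr1 (fun A => A v) hs => /= ->; rewrite /=; split.
have sv v : v \in s -> vset G v by move=> /ins /within_vset.
have memE x v : x \in [seq q.2 | q <- e & q.1 == v] <-> (v \in s /\ x \in s /\ par G v = Some x).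
  split.
    move=> /mapP [[a b]]; rewrite !mem_filter /= => /andP [/eqP ea /andP [hp hin]] ->.
    case/allpairsP: hin => [[a' b'] /= [ha hb [ea' eb']]].
    by subst; split=> //; split=> //; move/eqP: hp.
  case=> vs [xs hp]; apply/mapP; exists (v, x) => //.
  rewrite !mem_filter /= eqxx /= hp eqxx /=; apply/allpairsP; by exists (v, x).
have dpar v y : v \in s -> (par (dec c) v = Some y <-> (y \in s /\ par G v = Some y)).
  move=> vs; apply: (@ohead_iff _ (fun x => x \in s /\ par G v = Some x)).
    by move=> x; rewrite memE; split=> [[_ //]|[]]; split.
  by move=> x x' [_ ->] [_ [->]].
have dpar2 v y : par (dec c) v = Some y -> v \in s /\ y \in s /\ par G v = Some y.
  by move=> /ohead_mem /memE.
have vo : vset G (root G) := wFT_root wG.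
have os : root G \in s by apply/ins; exact: within_refl.
have fwd t v : (t <= N)%N -> within G t (root G) v -> within (dec c) t (root G) v.
  elim: t v => [|t IH] v tN /=; first by case=> -> _.
  case=> [h|[w [hw [vw [vv hp]]]]]; first by left; apply: IH => //; lia.
  have wt : within G t.+1 (root G) v by right; exists w; split=> //; split.
  have ws : w \in s by apply/ins; apply: within_mono hw; lia.
  have vs : v \in s by apply/ins; apply: within_mono wt.
  right; exists w; split; first by apply: IH => //; lia.
  split=> //; split=> //.
  by case: hp => hp; [left; apply/dpar|right; apply/dpar].
exists c; split=> //; split.
  split=> //; split; first by move=> v w _ /dpar2 [_ []].
  split.
    move=> v k /= vs k0 hk; apply: (wFT_acyc wG (sv _ vs) k0).
    move: hk; apply: anc_sub => x y /dpar2 [_ []] //.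
  move=> v _; apply: (@sub_finite_set _ _ [set` s]); first by move=> w [].
  by apply/finite_seqP; exists s.
split; first by move=> v hv; split=> //; exact: fwd.
split.
  move=> w hw; split=> //; move: hw; apply: within_sub; first by move=> x /sv.
  by move=> x y _ /dpar2 [_ []].
split=> // u v hu hv; rewrite /=; symmetry; apply: (iff_trans (dpar _ _ _)); first by apply/ins.
by split=> [[]|h] //; split=> //; apply/ins.
Qed.

Import Order.TTheory GRing.Theory Num.Theory.

HB.instance Definition _ := gen_eqMixin rnet.
HB.instance Definition _ := gen_choiceMixin rnet.
HB.instance Definition _ := isPointed.Build rnet (RNet set0 (fun _ => None) 0).


Lemma cbigcup (T : pointedType) (G : set (set T)) (I : countType) (P : I -> Prop) (F : I -> set T) :
  (forall c, P c -> <<s G >> (F c)) -> <<s G >> [set x | exists c, P c /\ F c x].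
Proof.
move=> hF.
pose A n : set T := match (unpickle n : option I) with
  | Some c => if `[< P c >] then F c else set0 | None => set0 end.
have -> : [set x | exists c, P c /\ F c x] = \bigcup_n A n.
  apply/seteqP; split=> x.
    case=> c [Pc Fx]; exists (pickle c) => //; rewrite /A pickleK.
    by case: asboolP.
  case=> n _; rewrite /A; case: (unpickle n) => // c; case: asboolP => // Pc Fx.
  by exists c.
apply: (@bigcupT_measurable _ (g_sigma_algebraType G)) => n; rewrite /A.
case: (unpickle n) => [c|]; last exact: (@measurable0 _ (g_sigma_algebraType G)).
case: asboolP => Pc; first exact: hF.
exact: (@measurable0 _ (g_sigma_algebraType G)).
Qed.

Definition gen1 H r := [set G : rnet | exists f, ball_iso G (root G) H (root H) r f].
Definition gen2 H q r := [set x : rnet2 | within x.1 r (root x.1) x.2 /\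
   exists f, ball_iso x.1 (root x.1) H (root H) r f /\ f x.2 = q].

Lemma gen1_meas H r : rnet_meas (gen1 H r).
Proof. by apply: sub_sigma_algebra; exists H, r. Qed.

Lemma gen2_meas H q r : rnet2_meas (gen2 H q r).
Proof. by apply: sub_sigma_algebra; exists H, q, r. Qed.

Lemma M2 N P : loc2 N P -> bnd2 N P ->
  exists S, rnet2_meas S /\ forall x, wFT x.1 -> (S x <-> P x.1 x.2).
Proof.
move=> hl hb.
exists [set x | exists c : code * nat, (wFT (dec c.1) /\ P (dec c.1) c.2) /\ gen2 (dec c.1) c.2 N x].
split; first by apply: cbigcup => c _; exact: gen2_meas.
move=> [G u] /= wG; split.
  case=> [[c q]] /= [[wD Pq] [wu [f [[g B] fu]]]].
  have [g' B'] := BI_sym B.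
  have := hl _ _ g' f q wD wG B' (hb _ _ wD Pq) Pq.
  by rewrite -fu; case: B' => _ [/(_ u wu) [_ ->]].
move=> Pu; have wu := hb _ _ wG Pu.
have [c [rc [wD B]]] := code_exists N wG.
exists (c, u); split => /=.
  split=> //; exact: (hl G (dec c) id id u wG wD B wu Pu).
split=> //; exists id; split=> //; by exists id.
Qed.

Lemma M1 N P : loc1 N P -> exists A, rnet_meas A /\ forall G, wFT G -> (A G <-> P G).
Proof.
move=> hl.
exists [set G | exists c : code, (wFT (dec c) /\ P (dec c)) /\ gen1 (dec c) N G].
split; first by apply: cbigcup => c _; exact: gen1_meas.
move=> G wG; split.
  case=> c [[wD Pc] [f [g B]]].
  have [g' B'] := BI_sym B.
  exact: hl _ _ g' f wD wG B' Pc.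
move=> PG; have [c [rc [wD B]]] := code_exists N wG.
exists c; split; first by split=> //; exact: hl _ _ _ _ wG wD B PG.
by exists id; exists id.
Qed.

Definition locf (R : realType) N (F : rnet -> \bar R) := forall G G' f g, wFT G -> wFT G' ->
  BI G (root G) G' (root G') N f g -> F G = F G'.

Lemma M1f (R : realType) N (F : rnet -> \bar R) : locf N F ->
  exists F' : rnet -> \bar R, (forall B : set (\bar R), measurable B -> rnet_meas (F' @^-1` B)) /\
     (forall G, wFT G -> F' G = F G) /\ ((forall G, (0 <= F G)%E) -> forall G, (0 <= F' G)%E).
Proof.
move=> hl.
pose W := [set G | exists c : code, wFT (dec c) /\ gen1 (dec c) N G].
pose F' G := xget 0%E [set y | exists c : code, (wFT (dec c) /\ gen1 (dec c) N G) /\ y = F (dec c)].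
have uniq G c c' : wFT (dec c) -> wFT (dec c') -> gen1 (dec c) N G -> gen1 (dec c') N G ->
    F (dec c) = F (dec c').
  move=> w1 w2 [f1 [g1 B1]] [f2 [g2 B2]].
  have [h1 C1] := BI_sym B1.
  exact: hl _ _ _ _ w1 w2 (BI_comp C1 B2).
have F'E G c : wFT (dec c) -> gen1 (dec c) N G -> F' G = F (dec c).
  move=> wc gc; rewrite /F'.
  have : exists y, [set y | exists c : code, (wFT (dec c) /\ gen1 (dec c) N G) /\ y = F (dec c)] y.
    by exists (F (dec c)); exists c.
  move=> /(xgetPex 0%E) [c' [[wc' gc'] ->]].
  exact: uniq wc' wc gc' gc.
have F'N G : ~ W G -> F' G = 0%E.
  move=> nW; rewrite /F' xgetPN // => y [c [[wc gc] _]]; apply: nW; by exists c.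
exists F'; split.
  move=> B mB.
  have -> : F' @^-1` B = [set G | exists c : code, (wFT (dec c) /\ B (F (dec c))) /\ gen1 (dec c) N G]
      `|` ([set G | B 0%E] `&` ~` W).
    apply/seteqP; split=> G /=.
      case: (pselect (W G)) => [[c [wc gc]]|nW].
        by rewrite (F'E G c wc gc) => hB; left; exists c.
      by rewrite F'N // => hB; right.
    case=> [[c [[wc hB] gc]]|[hB nW]]; first by rewrite (F'E G c wc gc).
    by rewrite F'N.
  apply: (@measurableU _ (g_sigma_algebraType rnet_gen)).
    by apply: cbigcup => c _; exact: gen1_meas.
  apply: (@measurableI _ (g_sigma_algebraType rnet_gen)).
    case: (pselect (B 0%E)) => hB.
      have -> : [set _ : rnet | B 0%E] = setT by apply/seteqP; split.
      exact: (@measurableT _ (g_sigma_algebraType rnet_gen)).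
    have -> : [set _ : rnet | B 0%E] = set0 by apply/seteqP; split.
    exact: (@measurable0 _ (g_sigma_algebraType rnet_gen)).
  apply: (@measurableC _ (g_sigma_algebraType rnet_gen)).
  by apply: cbigcup => c _; exact: gen1_meas.
split.
  move=> G wG; have [c [rc [wD B]]] := code_exists N wG.
  by rewrite (F'E G c wD _); [apply/esym; exact: hl _ _ _ _ wG wD B| exists id, id].
move=> F0 G; case: (pselect (W G)) => [[c [wc gc]]|nW].
  by rewrite (F'E G c wc gc).
by rewrite F'N.
Qed.

Definition ind (R : realType) (P : Prop) : \bar R := if `[< P >] then 1%E else 0%E.

Lemma ind_ge0 (R : realType) P : (0 <= ind R P)%E.
Proof. by rewrite /ind; case: asboolP. Qed.

Lemma esum_ind (R : realType) (V P : set nat) :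
  esum V (fun u => ind R (P u)) = esum (V `&` P) (fun _ => 1%E).
Proof.
rewrite esum_mkcondr; apply: eq_esum => u _; rewrite /ind.
by case: asboolP => h; [rewrite mem_set | rewrite memNset].
Qed.

Lemma esum_loc (R : realType) N Q : loc2 N Q -> bnd2 N Q ->
  locf N (fun T => esum (vset T) (fun u => ind R (Q T u))).
Proof.
move=> hl hb G G' f g wG wG' B; rewrite !esum_ind.
rewrite (@reindex_esum R _ _ (vset G `&` Q G) (vset G' `&` Q G') f) //.
have [g' B'] := BI_sym B.
split.
- move=> u [vu Qu]; have wu := hb _ _ wG Qu.
  split; last exact: hl B wu Qu.
  by case: B => /(_ u wu) [/within_vset].
- move=> u u' /set_mem [_ Qu] /set_mem [_ Qu'] e.
  case: B => /[dup] h1 /(_ u (hb _ _ wG Qu)) [_ <-].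
  by rewrite e; case: (h1 u' (hb _ _ wG Qu')).
- move=> w [vw Qw]; have ww := hb _ _ wG' Qw.
  exists (g' w); last by case: B' => /(_ w ww) [].
  split; first by case: B' => /(_ w ww) [/within_vset].
  by apply: hl B' ww Qw.
Qed.

Local Open Scope ereal_scope.

Lemma indE (R : realType) T (M : set T) w : ind R (M w) = (\1_M w)%:E.
Proof. by rewrite /ind indicE; case: asboolP => h; [rewrite mem_set|rewrite memNset]. Qed.

Lemma ind_iff (R : realType) (P Q : Prop) : (P <-> Q) -> ind R P = ind R Q.
Proof. by move=> /propext ->. Qed.

Lemma ind_meas (R : realType) (S : set rnet2) : rnet2_meas S ->
  forall B : set (\bar R), measurable B -> rnet2_meas ((fun x => ind R (S x)) @^-1` B).
Proof.
move=> mS B mB.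
have -> : (fun x => ind R (S x)) @^-1` B =
   ([set _ | B 1%E] `&` S) `|` ([set _ | B 0%E] `&` ~` S).
  apply/seteqP; split=> x /=; rewrite /ind; case: asboolP => h.
  - by left.
  - by right.
  - by case=> [[]|[_]].
  - by case=> [[_]|[]].
have cst (P : Prop) : rnet2_meas [set _ : rnet2 | P].
  case: (pselect P) => hP.
    have -> : [set _ : rnet2 | P] = setT by apply/seteqP; split.
    exact: (@measurableT _ (g_sigma_algebraType rnet2_gen)).
  have -> : [set _ : rnet2 | P] = set0 by apply/seteqP; split.
  exact: (@measurable0 _ (g_sigma_algebraType rnet2_gen)).
apply: (@measurableU _ (g_sigma_algebraType rnet2_gen)).
  by apply: (@measurableI _ (g_sigma_algebraType rnet2_gen)); [apply: cst|apply: mS].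
apply: (@measurableI _ (g_sigma_algebraType rnet2_gen)); first exact: cst.
exact: (@measurableC _ (g_sigma_algebraType rnet2_gen)).
Qed.

Lemma esum_single (R : realType) (V : set nat) (P : nat -> Prop) :
  (forall u u', P u -> P u' -> u = u') -> (forall u, P u -> V u) ->
  esum V (fun u => ind R (P u)) = ind R (exists u, P u).
Proof.
move=> un hV; rewrite esum_ind /ind; case: asboolP => [[u0 Pu0]|nP].
  have -> : V `&` P = [set u0].
    by apply/seteqP; split=> u /=; [case=> _ /(un _ _ Pu0) ->|move=> ->; split=> //; exact: hV].
  by rewrite esum_set1.
have -> : V `&` P = set0 by apply/seteqP; split=> u // [_ Pu]; apply: nP; exists u.
exact: esum_set0.
Qed.

Lemma unimod_step (R : realType) d (Om : measurableType d) (P : probability Om R)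
  (X : Om -> rnet) (Pp : rnet -> nat -> Prop) (S : set rnet2) :
  unimodular_rft P X -> rnet2_meas S -> (forall x, wFT x.1 -> (S x <-> Pp x.1 x.2)) ->
  \int[P]_w esum (vset (X w)) (fun u => ind R (Pp (X w) u)) =
  \int[P]_w esum (vset (X w)) (fun u => ind R (Pp (reroot (X w) u) (root (X w)))).
Proof.
move=> [hFT [_ hU]] mS hS.
have := hU (fun x => ind R (S x)) (fun x => ind_ge0 R (S x)) (ind_meas mS).
have e1 w : esum (vset (X w)) (fun u => ind R (S (X w, u))) =
            esum (vset (X w)) (fun u => ind R (Pp (X w) u)).
  apply: eq_esum => u _; apply: ind_iff; exact: (hS (X w, u) (FT_wFT (hFT w))).
have e2 w : esum (vset (X w)) (fun u => ind R (S (swap2 (X w, u)))) =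
            esum (vset (X w)) (fun u => ind R (Pp (reroot (X w) u) (root (X w)))).
  apply: eq_esum => u vu; apply: ind_iff.
  exact: (hS (swap2 (X w, u)) (wFT_reroot (FT_wFT (hFT w)) vu)).
by under eq_integral do rewrite e1; under [X in _ = X]eq_integral do rewrite e2.
Qed.

Lemma transfer (R : realType) d1 d2 (Om1 : measurableType d1) (Om2 : measurableType d2)
  (P1 : probability Om1 R) (P2 : probability Om2 R)
  (Z1 : Om1 -> g_sigma_algebraType rnet_gen) (Z2 : Om2 -> g_sigma_algebraType rnet_gen) :
  measurable_fun setT Z1 -> measurable_fun setT Z2 ->
  (forall A, rnet_meas A -> P1 (Z1 @^-1` A) = P2 (Z2 @^-1` A)) ->
  forall F : g_sigma_algebraType rnet_gen -> \bar R, measurable_fun setT F -> (forall x, 0 <= F x) ->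
  \int[P1]_w F (Z1 w) = \int[P2]_w F (Z2 w).
Proof.
move=> m1 m2 e F mF F0.
have -> : \int[P1]_w F (Z1 w) = \int[pushforward P1 Z1]_y F y.
  by rewrite ge0_integral_pushforward.
have -> : \int[P2]_w F (Z2 w) = \int[pushforward P2 Z2]_y F y.
  by rewrite ge0_integral_pushforward.
apply: eq_measure_integral => A mA _; exact: e.
Qed.

Lemma DX_meas (R : realType) d (Om : measurableType d) (P : probability Om R) (X : Om -> rnet) :
  unimodular_rft P X ->
  measurable_fun setT ((desc_tree \o X) : Om -> g_sigma_algebraType rnet_gen).
Proof.
move=> [hFT [hX _]]; apply: (@measurability _ _ Om (g_sigma_algebraType rnet_gen) setT (desc_tree \o X) rnet_gen) => //.
move=> _ [B [H [s ->]] <-].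
have [A [mA hA]] := M1 (@loc_PD H s s (leqnn s)).
have -> : setT `&` (desc_tree \o X) @^-1` [set G | exists f, ball_iso G (root G) H (root H) s f]
  = X @^-1` A.
  apply/seteqP; split=> w /=.
    by case=> _ h; apply/(hA _ (FT_wFT (hFT w))).
  by move=> /(hA _ (FT_wFT (hFT w))) h.
exact: hX.
Qed.

Lemma family_eq (R : realType) (d1 d2 : measure_display)
  (Omega1 : measurableType d1) (Omega2 : measurableType d2)
  (P1 : probability Omega1 R) (P2 : probability Omega2 R)
  (X1 : Omega1 -> rnet) (X2 : Omega2 -> rnet) N (Pp Sp : rnet -> nat -> Prop) :
  unimodular_rft P1 X1 -> unimodular_rft P2 X2 ->
  (forall A, rnet_meas A ->
     P1 ((desc_tree \o X1) @^-1` A) = P2 ((desc_tree \o X2) @^-1` A)) ->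
  loc2 N Pp -> bnd2 N Pp -> loc2 N Sp -> bnd2 N Sp ->
  (forall X u, wFT X -> vset X u -> (Pp (reroot X u) (root X) <-> Sp (desc_tree X) u)) ->
  (forall X u u', wFT X -> Pp X u -> Pp X u' -> u = u') ->
  exists A, rnet_meas A /\ (forall G, wFT G -> (A G <-> exists u, Pp G u)) /\
    P1 (X1 @^-1` A) = P2 (X2 @^-1` A).
Proof.
move=> U1 U2 hD lP bP lS bS sw un.
have [S [mS hS]] := M2 lP bP.
have [A [mA hA]] := M1 (loc1_ex lP bP).
have [Psi [mPsi [hPsi Psi0]]] := M1f (esum_loc R lS bS).
exists A; split=> //; split=> //.
have key d (Om : measurableType d) (P : probability Om R) (X : Om -> rnet) :
    unimodular_rft P X ->
    P (X @^-1` A) = \int[P]_w Psi (desc_tree (X w)).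
  move=> U; have [hFT [hX _]] := U.
  have wX w : wFT (X w) := FT_wFT (hFT w).
  rewrite -[X @^-1` A]setIT -integral_indic; last exact: hX.
  have e1 w : (\1_(X @^-1` A) w)%:E = esum (vset (X w)) (fun u => ind R (Pp (X w) u)).
    rewrite -indE esum_single.
    - by apply: ind_iff; rewrite /preimage /=; exact: hA.
    - by move=> u u'; apply: un.
    - by move=> u /(bP _ _ (wX w)) /within_vset.
  under eq_integral do rewrite e1.
  rewrite (unimod_step U mS hS).
  apply: eq_integral => w _; rewrite hPsi; last exact: wFT_desc.
  rewrite /= !esum_ind; congr esum; apply/seteqP; split=> u /=.
    by case=> vu /(sw _ _ (wX w) vu) h; split=> //; exact: within_vset (bS _ _ (wFT_desc (wX w)) h).
  case=> vu h; have vu' : vset (X w) u by case: vu.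
  by split=> //; apply/(sw _ _ (wX w) vu').
  exact: measurableT.
rewrite (key _ _ _ _ U1) (key _ _ _ _ U2).
apply: transfer; [exact: DX_meas U1|exact: DX_meas U2|exact: hD| |].
  by move=> _ B mB; rewrite setTI; apply: mPsi.
apply: Psi0 => G; apply: esum_ge0 => u _; exact: ind_ge0.
Qed.

Lemma Pk_uniq H r k X u u' : Pk H r k X u -> Pk H r k X u' -> u = u'.
Proof. by case=> h1 _ [h2 _]; move: h1; rewrite h2 => -[]. Qed.

Lemma Qj_uniq H r j X u u' : Qj H r j X u -> Qj H r j X u' -> u = u'.
Proof.
case=> a [h1 [h2 _]] [a' [h1' [h2' _]]]; move: h1; rewrite h1' => -[ea].
by move: h2; rewrite -ea h2' => -[].
Qed.

Local Open Scope nat_scope.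

Lemma nat_identity H r X : wFT X ->
  (`[< exists f, ball_iso X (root X) H (root H) r f >] : nat) +
    \sum_(0 <= j < r) (`[< exists u, Qj H r j X u >] : nat) =
  \sum_(0 <= k < r.+1) (`[< exists u, Pk H r k X u >] : nat).
Proof.
move=> wX; set o := root X.
have ac := wFT_acyc wX; have pc := wFT_parcl wX; have vo : vset X o := wFT_root wX.
pose e k := (`[< exists u, Pk H r k X u >] : nat).
pose c j := (`[< exists u, Qj H r j X u >] : nat).
have eS k a : anc X k o = Some a -> e k = `[< Eb H r X a o >].
  move=> h; rewrite /e; congr nat_of_bool; apply: asbool_equiv_eq; split.
    by case=> u [h1 h2]; move: h1; rewrite h => -[->].
  by move=> hE; exists a.
have eN k : anc X k o = None -> e k = 0.
  by move=> h; rewrite /e asboolF // => -[u [h1 _]]; rewrite h in h1.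
have cS j a b : anc X j o = Some a -> par X a = Some b -> c j = `[< Eb H r X a o >].
  move=> h hp; rewrite /c; congr nat_of_bool; apply: asbool_equiv_eq; split.
    by case=> u [a' [h1 [_ h3]]]; move: h1; rewrite h => -[->].
  by move=> hE; exists b, a.
have cN j a : anc X j o = Some a -> par X a = None -> c j = 0.
  move=> h hp; rewrite /c asboolF // => -[u [a' [h1 [h2 _]]]].
  by move: h1; rewrite h => -[ea]; rewrite -ea hp in h2.
have cN' j : anc X j o = None -> c j = 0.
  by move=> h; rewrite /c asboolF // => -[u [a' [h1 _]]]; rewrite h in h1.
suff: forall n, n <= r -> exists J a, J <= n /\ anc X J o = Some a /\ (J = n \/ par X a = None) /\
    \sum_(0 <= k < n.+1) e k = \sum_(0 <= j < n) c j + `[< Eb H r X a o >].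
  move=> /(_ r (leqnn r)) [J [a [Jr [hJ [top ->]]]]].
  rewrite addnC; congr addn; congr nat_of_bool; apply: asbool_equiv_eq.
  have [BL1 BL2] := BL ac pc vo hJ Jr top.
  split; case=> f hf; exists f; move: hf; apply: ball_iso_congr.
  - exact: BL1.
  - exact: BL2.
  - by move=> v; split => /BL1.
  - by move=> u v /BL1 hu /BL1 hv; apply: iff_sym (BL2 u v hu hv).
elim=> [|n IH] nr.
  exists 0, o; split=> //; split=> //; split; first by left.
  by rewrite big_nat1 big_geq // add0n (eS 0 o).
have [J [a [Jn [hJ [top hsum]]]]] := IH (ltnW nr).
rewrite big_nat_recr //= hsum big_nat_recr //=.
case: top => [eJ|top].
  subst J; case ep: (par X a) => [b|].
    have hb : anc X n.+1 o = Some b by rewrite /= hJ /= ep.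
    exists n.+1, b; split=> //; split=> //; split; first by left.
    by rewrite (eS _ _ hb) (cS _ _ _ hJ ep).
  exists n, a; split; first exact: leqW.
  split=> //; split; first by right.
  have hn1 : anc X n.+1 o = None by rewrite /= hJ /= ep.
  by rewrite (eN _ hn1) (cN _ _ hJ ep) !addn0.
exists J, a; split; first exact: leqW.
split=> //; split; first by right.
have hn1 : anc X n.+1 o = None by apply: anc_after_top hJ top _; lia.
case: (eqVneq J n) => [eJ|nJ].
  by subst J; rewrite (eN _ hn1) (cN _ _ hJ top) !addn0.
have hn : anc X n o = None by apply: anc_after_top hJ top _; lia.
by rewrite (eN _ hn1) (cN' _ hn) !addn0.
Qed.

Local Close Scope nat_scope.

Lemma ind_nat (R : realType) (P : Prop) : ind R P = (((`[< P >] : nat))%:R)%:E.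
Proof. by rewrite /ind; case: asboolP. Qed.

Lemma space_id (R : realType) d (Om : measurableType d) (P : probability Om R) (X : Om -> rnet)
  H r (A B : nat -> set rnet) : unimodular_rft P X ->
  (forall k, rnet_meas (A k) /\ forall G, wFT G -> (A k G <-> exists u, Pk H r k G u)) ->
  (forall j, rnet_meas (B j) /\ forall G, wFT G -> (B j G <-> exists u, Qj H r j G u)) ->
  \sum_(0 <= j < r) P (X @^-1` B j) + P (X @^-1` gen1 H r) =
  \sum_(0 <= k < r.+1) P (X @^-1` A k).
Proof.
move=> [hFT [hX _]] hA hB.
pose B' j := if j == r then gen1 H r else B j.
have mB' j : rnet_meas (B' j) by rewrite /B'; case: eqP => _; [exact: gen1_meas|case: (hB j)].
have mA k : rnet_meas (A k) by case: (hA k).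
have meas1 M : rnet_meas M -> measurable_fun setT (fun w => (\1_(X @^-1` M) w : R)%:E).
  move=> mM; apply/measurable_EFinP; apply: measurable_indic; exact: hX.
have int1 M : rnet_meas M -> \int[P]_w (\1_(X @^-1` M) w)%:E = P (X @^-1` M).
  by move=> mM; rewrite integral_indic ?setIT //; exact: hX.
have -> : \sum_(0 <= j < r) P (X @^-1` B j) + P (X @^-1` gen1 H r) =
          \sum_(0 <= j < r.+1) \int[P]_w (\1_(X @^-1` B' j) w)%:E.
  rewrite big_nat_recr //=; congr (_ + _).
    apply: eq_big_nat => j /andP [_ jr]; rewrite int1 // /B'.
    by rewrite (_ : (j == r) = false) //; apply/negbTE; rewrite neq_ltn jr.
  by rewrite int1 // /B' eqxx.
have -> : \sum_(0 <= k < r.+1) P (X @^-1` A k) =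
          \sum_(0 <= k < r.+1) \int[P]_w (\1_(X @^-1` A k) w)%:E.
  by apply: eq_bigr => k _; rewrite int1.
have f0 (M : nat -> set rnet) k w : setT w -> (0 <= (fun k w => (\1_(X @^-1` M k) w : R)%:E) k w).
  by move=> _; rewrite lee_fin indicE.
rewrite -(@ge0_integral_sum _ _ _ P setT measurableT nat (fun k w => (\1_(X @^-1` B' k) w)%:E)
  (fun k => meas1 _ (mB' k)) (f0 B')).
rewrite -(@ge0_integral_sum _ _ _ P setT measurableT nat (fun k w => (\1_(X @^-1` A k) w)%:E)
  (fun k => meas1 _ (mA k)) (f0 A)).
apply: eq_integral => w _.
have wX : wFT (X w) := FT_wFT (hFT w).
have eB j : (j < r)%N -> (\1_(X @^-1` B' j) w : R)%:E =
    (((`[< exists u, Qj H r j (X w) u >] : nat))%:R)%:E.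
  move=> jr; rewrite -indE ind_nat /B'.
  rewrite (_ : (j == r) = false); last by apply/negbTE; rewrite neq_ltn jr.
  by congr (_%:R)%:E; congr nat_of_bool; apply: asbool_equiv_eq; case: (hB j) => _ /(_ _ wX).
have eC : (\1_(X @^-1` B' r) w : R)%:E =
    (((`[< exists f, ball_iso (X w) (root (X w)) H (root H) r f >] : nat))%:R)%:E.
  by rewrite -indE ind_nat /B' eqxx.
have eA k : (\1_(X @^-1` A k) w : R)%:E =
    (((`[< exists u, Pk H r k (X w) u >] : nat))%:R)%:E.
  by rewrite -indE ind_nat; congr (_%:R)%:E; congr nat_of_bool; apply: asbool_equiv_eq; case: (hA k) => _ /(_ _ wX).
rewrite big_nat_recr //= eC.
rewrite (@eq_big_nat _ _ _ 0 r _ (fun j => (((`[< exists u, Qj H r j (X w) u >] : nat))%:R)%:E)); last first.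
  by move=> j /andP [_ jr]; rewrite eB.
rewrite [in RHS](eq_bigr (fun k => (((`[< exists u, Pk H r k (X w) u >] : nat))%:R)%:E)); last first.
  by move=> k _; rewrite eA.
rewrite !sumEFin -EFinD; congr EFin; rewrite -!natr_sum -natrD; congr (_%:R)%R.
by rewrite addnC; exact: nat_identity.
Qed.

Lemma gen_eq (R : realType) (d1 d2 : measure_display)
  (Omega1 : measurableType d1) (Omega2 : measurableType d2)
  (P1 : probability Omega1 R) (P2 : probability Omega2 R)
  (X1 : Omega1 -> rnet) (X2 : Omega2 -> rnet) :
  unimodular_rft P1 X1 -> unimodular_rft P2 X2 ->
  (forall A, rnet_meas A ->
     P1 ((desc_tree \o X1) @^-1` A) = P2 ((desc_tree \o X2) @^-1` A)) ->
  forall H r, P1 (X1 @^-1` gen1 H r) = P2 (X2 @^-1` gen1 H r).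
Proof.
move=> U1 U2 hD H r.
have /choice [A hA] : forall k, exists A, rnet_meas A /\
    (forall G, wFT G -> (A G <-> exists u, Pk H r k G u)) /\ P1 (X1 @^-1` A) = P2 (X2 @^-1` A).
  move=> k; apply: (@family_eq _ _ _ _ _ P1 P2 X1 X2 (k + k + r + 1) (Pk H r k) (Sk H r k) U1 U2 hD).
  - by apply: loc_Pk; lia.
  - by apply: bnd_Pk; lia.
  - by apply: loc_Sk; lia.
  - by apply: bnd_Sk; lia.
  - by move=> X u wX vu; exact: swapP.
  - by move=> X u u' _; exact: Pk_uniq.
have /choice [B hB] : forall j, exists B, rnet_meas B /\
    (forall G, wFT G -> (B G <-> exists u, Qj H r j G u)) /\ P1 (X1 @^-1` B) = P2 (X2 @^-1` B).
  move=> j; apply: (@family_eq _ _ _ _ _ P1 P2 X1 X2 (j + j + r + 2) (Qj H r j) (Sj H r j) U1 U2 hD).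
  - by apply: loc_Qj; lia.
  - by apply: bnd_Qj; lia.
  - by apply: loc_Sj; lia.
  - by apply: bnd_Sj; lia.
  - by move=> X u wX vu; exact: swapQ.
  - by move=> X u u' _; exact: Qj_uniq.
have hA' k : rnet_meas (A k) /\ forall G, wFT G -> (A k G <-> exists u, Pk H r k G u).
  by case: (hA k) => ? [? _].
have hB' j : rnet_meas (B j) /\ forall G, wFT G -> (B j G <-> exists u, Qj H r j G u).
  by case: (hB j) => ? [? _].
have e1 := space_id U1 hA' hB'.
have e2 := space_id U2 hA' hB'.
have sA : \sum_(0 <= k < r.+1) P1 (X1 @^-1` A k) = \sum_(0 <= k < r.+1) P2 (X2 @^-1` A k).
  by apply: eq_bigr => k _; case: (hA k) => _ [].
have sB : \sum_(0 <= j < r) P1 (X1 @^-1` B j) = \sum_(0 <= j < r) P2 (X2 @^-1` B j).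
  by apply: eq_bigr => j _; case: (hB j) => _ [].
have fin : \sum_(0 <= j < r) P2 (X2 @^-1` B j) \is a fin_num.
  apply/sum_fin_numP => j _ _; apply: fin_num_measure.
  by case: U2 => _ [hX _]; apply: hX; case: (hB j).
move: e1; rewrite sA sB -e2 => e.
have := congr1 (fun z => z - \sum_(0 <= j < r) P2 (X2 @^-1` B j)) e.
by rewrite /= ![\sum_(0 <= j < r) _ + _]addeC !addeK.
Qed.

Unset Implicit Arguments.

Theorem lemma4p18 (R : realType) (d1 d2 : measure_display)
  (Omega1 : measurableType d1) (Omega2 : measurableType d2)
  (P1 : probability Omega1 R) (P2 : probability Omega2 R)
  (X1 : Omega1 -> rnet) (X2 : Omega2 -> rnet) :
  unimodular_rft P1 X1 -> unimodular_rft P2 X2 ->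
  (forall A, rnet_meas A ->
     P1 ((desc_tree \o X1) @^-1` A) = P2 ((desc_tree \o X2) @^-1` A)) ->
  forall A, rnet_meas A -> P1 (X1 @^-1` A) = P2 (X2 @^-1` A).
Proof.
move=> U1 U2 hD.
have hg := gen_eq U1 U2 hD.
have mX1 : measurable_fun setT (X1 : Omega1 -> g_sigma_algebraType rnet_gen).
  move=> _ B mB; rewrite setTI; case: U1 => _ [hX _]; exact: hX.
have mX2 : measurable_fun setT (X2 : Omega2 -> g_sigma_algebraType rnet_gen).
  move=> _ B mB; rewrite setTI; case: U2 => _ [hX _]; exact: hX.
pose G := [set A : set (g_sigma_algebraType rnet_gen) | rnet_gen A \/ A = set0 \/ A = setT].
have Gm : G `<=` measurable.
  move=> A [hA|[->|->]]; [exact: sub_sigma_algebra|exact: measurable0|exact: measurableT].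
have setIG : setI_closed G.
  have key (H K : rnet) r s : (r <= s)%N ->
      G (gen1 H r `&` gen1 K s).
    move=> rs; rewrite /G /=; case: (pselect (exists G0, (gen1 H r `&` gen1 K s) G0)) => [[G0 [[f0 h0] [f1 h1]]]|none].
      left; exists K, s; apply/seteqP; split=> G1; first by case.
      move=> [f2 h2]; split; last by exists f2.
      have [f3 h3] := ball_iso_sym h1.
      have h4 := ball_iso_restrict rs (ball_iso_comp h2 h3).
      by exists (f0 \o (f3 \o f2)); exact: ball_iso_comp h4 h0.
    by right; left; apply/seteqP; split=> // G1 h; apply: none; exists G1.
  move=> A B [[H [r ->]]|[->|->]] [[K [s ->]]|[->|->]];
    rewrite ?setI0 ?set0I ?setIT ?setTI /G /=; try by [right; left|right; right|left; exists H, r|left; exists K, s].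
  case: (leqP r s) => rs; first exact: key.
  rewrite setIC; apply: key; exact: ltnW.
have m1m2 : forall A, G A -> pushforward P1 (X1 : Omega1 -> g_sigma_algebraType rnet_gen) A = pushforward P2 (X2 : Omega2 -> g_sigma_algebraType rnet_gen) A.
  move=> A [[H [r ->]]|[->|->]]; rewrite /pushforward.
  - exact: hg.
  - by rewrite !preimage_set0 !measure0.
  - by rewrite !preimage_setT !probability_setT.
move=> A mA.
have := @g_sigma_algebra_measure_unique _ R (g_sigma_algebraType rnet_gen) G Gm (fun=> setT)
  (fun _ => or_intror (or_intror erefl)) _ (pushforward P1 (X1 : Omega1 -> g_sigma_algebraType rnet_gen)) (pushforward P2 (X2 : Omega2 -> g_sigma_algebraType rnet_gen)) setIG m1m2 _ A.
rewrite /pushforward; apply; try exact: mX1; try exact: mX2.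
- by apply/seteqP; split=> // x _; exists 0%N.
- by move=> k /=; change (P1 [set: Omega1] < +oo)%E; rewrite probability_setT ltey.
- apply: (sub_sigma_algebra2 (M := rnet_gen)) => //; by move=> B hB; left.
Qed.
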